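(* Let $p$ be a prime and $m$ a positive integer with $m+2\le p$. Let $B$ be a finite left brace with $(B,+)\cong \mathbb{Z}/(p^{\alpha_1})\times\cdots\times\mathbb{Z}/(p^{\alpha_m})$ for integers $1\le\alpha_1\le\cdots\le\alpha_m$. For $i\ge 0$ let $\Omega_i(B,+)=\{x\in B: p^ix=0\}$. Then for every $i\ge1$ and every $a\in\Omega_{i+1}(B,+)\setminus\Omega_i(B,+)$, the $p$-th power $a^p$ of $a$ in $(B,\cdot)$ satisfies $a^p\in\Omega_i(B,+)\setminus\Omega_{i-1}(B,+)$.
   Context: A left brace is a set $B$ with two binary operations $+$ and $\cdot$ such that $(B,+)$ is an abelian group, $(B,\cdot)$ is a group, and $a\cdot(b+c)+a=a\cdot b+a\cdot c$ for all $a,b,c\in B$. $a^p$ denotes $a\cdot a\cdots a$ ($p$ factors) in $(B,\cdot)$. *)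

(* Defs.v *)
From HB Require Import structures.
From mathcomp Require Import all_boot all_order all_algebra.
Set Implicit Arguments. Unset Strict Implicit. Unset Printing Implicit Defensive.
Import GRing.Theory.
Local Open Scope ring_scope.

Definition is_left_brace (B : zmodType) (mul : B -> B -> B) (one : B)
    (inv : B -> B) : Prop :=
  [/\ (forall a b c, mul a (mul b c) = mul (mul a b) c),
      (forall a, mul one a = a /\ mul a one = a),
      (forall a, mul (inv a) a = one /\ mul a (inv a) = one)
    & (forall a b c, mul a (b + c) + a = mul a b + mul a c)].

Definition bpow (B : Type) (mul : B -> B -> B) (one : B) (a : B) (n : nat) : B :=
  iter n (mul a) one.

Definition Omega (B : zmodType) (p i : nat) : pred B :=
  [pred x : B | x *+ (p ^ i)%N == 0].

Definition add_iso_prod_cyclic (B : zmodType) (p m : nat) (alpha : 'I_m -> nat) : Prop :=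
  exists f : B -> forall i : 'I_m, 'Z_(p ^ alpha i),
    [/\ injective f,
        (forall y : forall i : 'I_m, 'Z_(p ^ alpha i),
            exists x, forall i, f x i = y i)
      & (forall x y i, f (x + y) i = f x i + f y i)].

(* Main.v *)
Require Import Defs.
From HB Require Import structures.
From mathcomp Require Import all_boot all_order all_algebra all_fingroup all_solvable zify.
From Stdlib Require Import FunctionalExtensionality.
Set Implicit Arguments. Unset Strict Implicit. Unset Printing Implicit Defensive.
Import GRing.Theory.
Local Open Scope ring_scope.

Definition additf (B : zmodType) (g : B -> B) := forall x y, g (x + y) = g x + g y.

Section Add.
Variable B : zmodType.
Implicit Types g : B -> B.

Lemma adf0 g : additf g -> g 0 = 0.
Proof. move=> h; apply: (addrI (g 0)); by rewrite -h !addr0. Qed.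

Lemma adfN g : additf g -> forall x, g (- x) = - g x.
Proof. move=> h x; apply: (addrI (g x)); by rewrite -h !subrr adf0. Qed.

Lemma adfMn g : additf g -> forall x n, g (x *+ n) = g x *+ n.
Proof. move=> h x; elim=> [|n IH]; first by rewrite !mulr0n adf0.
by rewrite !mulrS h IH. Qed.

Lemma adf_sum g (I : finType) (F : I -> B) : additf g ->
  g (\sum_(i : I) F i) = \sum_(i : I) g (F i).
Proof. move=> h; exact: (big_morph g h (adf0 h)). Qed.

Lemma adf_iter g k : additf g -> additf (iter k g).
Proof. move=> h; elim: k => [|k IH] x y //=; by rewrite IH h. Qed.

Lemma adf_sub g : additf g -> additf (fun y => g y - y).
Proof. move=> h x y; rewrite h opprD; by rewrite addrACA. Qed.

Lemma iter_mul (T : Type) (f : T -> T) n k x : iter (n * k) f x = iter n (iter k f) x.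
Proof. elim: n => [|n IH] //=; by rewrite mulSn iterD IH. Qed.

Variable M : B -> B.
Hypothesis MD : additf M.
Let E y := M y - y.

Lemma iterE_S j x : M (iter j E x) = iter j.+1 E x + iter j E x.
Proof. by rewrite iterS /E subrK. Qed.

Lemma binom_iter n x :
  iter n M x = \sum_(j < n.+1) (iter j E x) *+ 'C(n, j).
Proof.
elim: n => [|n IH]; first by rewrite big_ord1 /= mulr1n.
rewrite iterS IH adf_sum //.
transitivity (\sum_(j < n.+1) (iter j.+1 E x *+ 'C(n,j) + iter j E x *+ 'C(n,j))).
  by apply: eq_bigr => j _; rewrite adfMn // iterE_S mulrnDl.
rewrite big_split [RHS]big_ord_recl.
have -> : \sum_(i < n.+1) iter (lift ord0 i) E x *+ 'C(n.+1, lift ord0 i) =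
   \sum_(i < n.+1) iter i.+1 E x *+ 'C(n, i.+1) + \sum_(i < n.+1) iter i.+1 E x *+ 'C(n, i).
  by rewrite -big_split; apply: eq_bigr => i _; rewrite lift0 binS mulrnDr.
rewrite [X in _ + X = _]big_ord_recl [X in _ = _ + (X + _)]big_ord_recr /=.
rewrite (bin_small (ltnSn n)) mulr0n addr0 !bin0.
have -> : \sum_(i < n) E (iter (0 + i) E x) *+ 'C(n, bump 0 i) =
  \sum_(i < n) E (iter i E x) *+ 'C(n, i.+1) by apply: eq_bigr => i _; rewrite add0n /bump leq0n.
rewrite addrCA; congr (_ + _); exact: addrC.
Qed.

Lemma geom_iter n x :
  \sum_(k < n) iter k M x = \sum_(j < n) (iter j E x) *+ 'C(n, j.+1).
Proof.
elim: n => [|n IH]; first by rewrite !big_ord0.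
rewrite big_ord_recl.
have -> : \sum_(i < n) iter (lift ord0 i) M x = M (\sum_(i < n) iter i M x).
  by rewrite adf_sum //; apply: eq_bigr => i _; rewrite lift0.
rewrite IH adf_sum //.
transitivity (iter 0 M x + \sum_(j < n) (iter j.+1 E x *+ 'C(n,j.+1) + iter j E x *+ 'C(n,j.+1))).
  by congr (_ + _); apply: eq_bigr => j _; rewrite adfMn // iterE_S mulrnDl.
have -> : \sum_(j < n.+1) iter j E x *+ 'C(n.+1, j.+1) =
   \sum_(j < n.+1) iter j E x *+ 'C(n, j.+1) + \sum_(j < n.+1) iter j E x *+ 'C(n, j).
  by rewrite -big_split; apply: eq_bigr => i _; rewrite binS mulrnDr.
rewrite big_split [X in _ = X + _]big_ord_recr [X in _ = _ + X]big_ord_recl /=.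
rewrite (bin_small (ltnSn n)) mulr0n addr0 !bin0.
by rewrite mulr1n addrA [RHS]addrC.
Qed.

End Add.

Section Brace.
Variables (B : zmodType) (mul : B -> B -> B) (one : B) (inv : B -> B).
Hypothesis HB : is_left_brace mul one inv.

Definition blam b x := - b + mul b x.

Lemma brace_dist a b c : mul a (b + c) + a = mul a b + mul a c.
Proof. by case: HB. Qed.
Lemma mul_assoc a b c : mul a (mul b c) = mul (mul a b) c.
Proof. by case: HB. Qed.
Lemma mul1 a : mul one a = a. Proof. by case: HB => _ h _ _; case: (h a). Qed.
Lemma mulb0 b : mul b 0 = b.
Proof. have := brace_dist b 0 0; rewrite addr0 => h; exact: (addrI (mul b 0)) (esym h). Qed.
Lemma one0 : one = 0. Proof. by rewrite -(mul1 0) mulb0. Qed.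

Lemma blamD b : additf (blam b).
Proof.
move=> x y; rewrite /blam.
have h : mul b (x + y) = mul b x + mul b y - b by rewrite -brace_dist addrK.
by rewrite h [RHS]addrACA [LHS]addrCA addrC.
Qed.

Lemma mul_dist' b x y : mul b (x + y) = mul b x + mul b y - b.
Proof. by rewrite -brace_dist addrK. Qed.

Lemma mulbN b c : mul b (- c) = b + b - mul b c.
Proof.
have h := brace_dist b c (- c); rewrite subrr mulb0 in h.
by rewrite h addrC addKr.
Qed.

Lemma blamM b c x : blam (mul b c) x = blam b (blam c x).
Proof.
rewrite /blam mul_dist' mulbN mul_assoc.
by rewrite [X in _ = _ + X]addrAC [X in _ = _ + (X + _)]addrAC addrK addrA addKr.
Qed.

Lemma blam1 x : blam one x = x.
Proof. by rewrite /blam mul1 one0 oppr0 add0r. Qed.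

Lemma iter_blam a n x : iter n (blam a) x = blam (bpow mul one a n) x.
Proof.
elim: n x => [|n IH] x /=; first by rewrite blam1.
by rewrite IH -blamM.
Qed.

Lemma bpow_sum a n : bpow mul one a n = \sum_(k < n) iter k (blam a) a.
Proof.
elim: n => [|n IH]; first by rewrite big_ord0 /bpow /= one0.
rewrite big_ord_recl /=.
have -> : \sum_(i < n) iter (lift ord0 i) (blam a) a = blam a (\sum_(i < n) iter i (blam a) a).
  by rewrite adf_sum; [apply: eq_bigr => i _; rewrite lift0 | exact: blamD].
by rewrite -IH /blam addrA subrr add0r.
Qed.

End Brace.

Lemma mulrn_dvd_0 (B : zmodType) (y : B) p k : y *+ p = 0 -> (p %| k)%N -> y *+ k = 0.
Proof. by move=> h /dvdnP [q ->]; rewrite mulnC mulrnA h mul0rn. Qed.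

Lemma adf_p0 (B : zmodType) (g : B -> B) p x : additf g -> x *+ p = 0 -> g x *+ p = 0.
Proof. by move=> hg hx; rewrite -adfMn // hx adf0. Qed.

Lemma frob (B : zmodType) (g : B -> B) p x : prime p -> additf g -> x *+ p = 0 ->
  iter p g x = x + iter p (fun y => g y - y) x.
Proof.
move=> pr hg hx; rewrite binom_iter //.
have [p' def_p] : exists p', p = p'.+1 by exists p.-1; rewrite prednK // prime_gt0.
subst p.
have hk : forall j, (0 < j < p'.+1)%N -> iter j (fun y => g y - y) x *+ 'C(p'.+1, j) = 0.
  move=> j hj; apply: (mulrn_dvd_0 (p := p'.+1)); last exact: prime_dvd_bin.
  by apply: adf_p0 => //; apply: adf_iter; apply: adf_sub.
rewrite big_ord_recl /= bin0 mulr1n; congr (_ + _).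
rewrite big_ord_recr /= binn mulr1n big1 ?add0r //.
move=> i _; apply: (hk (bump 0 i)).
by case: i => i /= hi; rewrite /bump /= add1n ltnS.
Qed.

Lemma pow_iter (B : zmodType) (g : B -> B) p t : prime p -> additf g ->
  forall x, x *+ p = 0 -> iter (p ^ t) (fun y => g y - y) x = iter (p ^ t) g x - x.
Proof.
move=> pr hg; elim: t => [|t IH] x hx; first by rewrite expn0.
rewrite expnSr mulnC !iter_mul.
have hG : additf (iter (p ^ t) g) by apply: adf_iter.
rewrite (frob pr hG hx) addrAC subrr add0r.
suff H : forall k, iter k (iter (p ^ t) (fun y => g y - y)) x =
    iter k (fun y => iter (p ^ t) g y - y) x /\
    (iter k (fun y => iter (p ^ t) g y - y) x) *+ p = 0 by case: (H p).
elim => [|k [IHk Hk]] //=.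
split; first by rewrite IHk IH.
by apply: (adf_p0 (adf_sub hG)) Hk.
Qed.

Definition Om1 (B : finZmodType) p := [set x : B | x *+ p == 0].

Section Chain.
Variables (B : finZmodType) (p m N : nat) (E : B -> B).
Hypotheses (pr : prime p) (ED : additf E)
  (hN : forall x, x *+ p = 0 -> iter N E x = 0)
  (hc : (#|Om1 B p| <= p ^ m)%N).

Definition Sk k := [set x : B | (x *+ p == 0) && (iter k E x == 0)].

Lemma Sk_add k x y : x \in Sk k -> y \in Sk k -> x + y \in Sk k.
Proof.
rewrite !inE => /andP[/eqP h1 /eqP h2] /andP[/eqP h3 /eqP h4].
by rewrite mulrnDl h1 h3 addr0 (adf_iter k ED) h2 h4 addr0 eqxx.
Qed.

Lemma Sk_opp k x : x \in Sk k -> - x \in Sk k.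
Proof.
rewrite !inE => /andP[/eqP h1 /eqP h2].
by rewrite mulNrn h1 oppr0 (adfN (adf_iter k ED)) h2 oppr0 eqxx.
Qed.

Lemma Sk_mulrn k x n : x \in Sk k -> x *+ n \in Sk k.
Proof.
rewrite !inE => /andP[/eqP h1 /eqP h2].
by rewrite mulrnAC h1 mul0rn (adfMn (adf_iter k ED)) h2 mul0rn eqxx.
Qed.

Lemma Sk_sub k : Sk k \subset Sk k.+1.
Proof.
apply/subsetP => x; rewrite !inE => /andP[-> /eqP h] /=; by rewrite h (adf0 ED).
Qed.

Lemma Sk_mono k j : Sk k \subset Sk (k + j).
Proof.
elim: j => [|j IH]; first by rewrite addn0.
by apply: subset_trans IH _; rewrite addnS Sk_sub.
Qed.

Lemma Sk_stab k : Sk k = Sk k.+1 -> Sk k.+1 = Sk k.+2.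
Proof.
move=> h; apply/eqP; rewrite eqEsubset Sk_sub /=; apply/subsetP => x.
rewrite inE => /andP[hx /eqP h2].
have : E x \in Sk k.
  by rewrite h inE (adf_p0 ED (eqP hx)) eqxx andTb -iterSr h2.
by rewrite inE => /andP[_ h3]; rewrite inE hx; have := iterSr k E x; move=> /= ->.
Qed.

Lemma Sk_stab_all k j : Sk k = Sk k.+1 -> Sk (k + j) = Sk k.
Proof.
move=> h; elim: j => [|j IH]; first by rewrite addn0.
have h' : Sk (k + j) = Sk (k + j).+1.
  elim: j {IH} => [|j IHj]; first by rewrite addn0.
  by rewrite addnS; apply: Sk_stab.
by rewrite addnS -h' IH.
Qed.

Lemma Sk_Om k : Sk k \subset Om1 B p.
Proof. by apply/subsetP => x; rewrite /Om1 !inE => /andP[]. Qed.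

Lemma Sk_N : Sk N = Om1 B p.
Proof.
apply/eqP; rewrite eqEsubset Sk_Om; apply/subsetP => x; rewrite /Om1 !inE => hx.
by rewrite hx hN //= (eqP hx).
Qed.

Lemma Sk_bezout k y d : y *+ p = 0 -> (0 < d < p)%N -> y *+ d \in Sk k -> y \in Sk k.
Proof.
move=> hy /andP[d0 dp] hd.
have [a _ ha] := Bezoutl d (prime_gt0 pr).
have cop : coprime p d by rewrite prime_coprime // gtnNdvd.
rewrite (eqP cop) in ha.
have h0 : y *+ (1 + a * d) = 0 by apply: mulrn_dvd_0 hy ha.
rewrite mulrnDr mulr1n in h0.
have -> : y = - (y *+ (a * d)) by apply/eqP; rewrite -addr_eq0 h0.
by apply: Sk_opp; rewrite mulnC mulrnA; apply: Sk_mulrn.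
Qed.

Lemma Sk_inj_aux k y (j j' : 'I_p) s s' : y *+ p = 0 -> y \notin Sk k ->
  s \in Sk k -> s' \in Sk k -> (j <= j')%N -> s + y *+ j = s' + y *+ j' -> j = j'.
Proof.
move=> hy hny hs hs' hjj heq.
have hd : y *+ (j' - j) \in Sk k.
  rewrite mulrnBr //.
  have -> : y *+ j' - y *+ j = s - s'.
    by apply/eqP; rewrite subr_eq addrAC heq addrAC subrr add0r.
  by apply: Sk_add => //; apply: Sk_opp.
apply/val_inj/eqP; rewrite eqn_leq hjj /= leqNgt; apply/negP => hlt.
have hlt' : (0 < j' - j < p)%N.
  by rewrite subn_gt0 hlt /= (leq_ltn_trans (leq_subr _ _)) // ltn_ord.
by rewrite (Sk_bezout hy hlt' hd) in hny.
Qed.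

Lemma Sk_count k : Sk k \proper Sk k.+1 -> (p * #|Sk k| <= #|Sk k.+1|)%N.
Proof.
move=> /properP [sub [y yS1 ynS]].
have hy : y *+ p = 0 by move: yS1; rewrite inE => /andP[/eqP].
pose X := setX [set: 'I_p] (Sk k).
have hX : #|X| = (p * #|Sk k|)%N by rewrite cardsX cardsT card_ord.
pose phi (u : 'I_p * B) := u.2 + y *+ u.1.
have inj : {in X &, injective phi}.
  move=> [j s] [j' s'] /setXP[_ hs] /setXP[_ hs'] /= heq; rewrite /phi /= in heq.
  have ej : j = j'.
    case: (leqP j j') => hjj; first exact: (Sk_inj_aux hy ynS hs hs' hjj heq).
    by apply/esym/(Sk_inj_aux hy ynS hs' hs (ltnW hjj)).
  by subst j'; move/addIr: heq => ->.
rewrite -hX -(card_in_imset inj); apply: subset_leq_card.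
apply/subsetP => z /imsetP [[j s] /setXP [_ hs] hz]; rewrite hz /phi /=.
apply: Sk_add; first by apply: (subsetP sub).
exact: Sk_mulrn.
Qed.

Lemma Sk_m : Sk m = Om1 B p.
Proof.
apply/eqP; rewrite eqEsubset Sk_Om /=; apply: contraT => hne.
have hneq : forall k, (k <= m)%N -> Sk k != Sk k.+1.
  move=> k km; apply/eqP => h; apply: (negP hne).
  rewrite -Sk_N; apply: subset_trans (Sk_mono N k) _.
  rewrite addnC (Sk_stab_all N h) -(subnKC km); apply: Sk_mono.
have hcard : forall k, (k <= m.+1)%N -> (p ^ k <= #|Sk k|)%N.
  elim => [|k IH] km.
    by rewrite expn0; apply/card_gt0P; exists 0; rewrite inE mul0rn eqxx.
  apply: leq_trans (Sk_count _); last by rewrite properEneq hneq // Sk_sub.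
  by rewrite expnS leq_mul2l IH ?orbT // ltnW.
have := leq_trans (hcard m.+1 (leqnn _)) (leq_trans (subset_leq_card (Sk_Om _)) hc).
by rewrite leq_exp2l ?ltnn // prime_gt1.
Qed.
End Chain.

Lemma Zp_dig p n (z : 'Z_(p ^ n)) : prime p -> (1 <= n)%N -> z *+ p = 0 ->
  (p ^ n.-1 %| z)%N /\ (z %/ p ^ n.-1 < p)%N.
Proof.
move=> pr n1 hz.
have p1 : (1 < p ^ n)%N by rewrite -(expn0 p) ltn_exp2l ?prime_gt1.
have hn : (p ^ n = p ^ n.-1 * p)%N by rewrite -expnSr prednK.
have zlt : (z < p ^ n)%N by rewrite -{2}(Zp_cast p1) ltn_ord.
have h0 := congr1 val hz; rewrite Zp_mulrn /= in h0.
move: h0 zlt; move: (nat_of_ord z) => v; rewrite Zp_cast // => h0 zlt.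
split.
  by move/eqP: h0; rewrite -/(dvdn _ _) {1}hn dvdn_pmul2r ?prime_gt0.
by rewrite ltn_divLR ?expn_gt0 ?prime_gt0 // mulnC -hn.
Qed.

Lemma card_Om1 (B : finZmodType) p m (alpha : 'I_m -> nat) : prime p ->
  (forall i, 1 <= alpha i)%N -> add_iso_prod_cyclic B p alpha -> (#|Om1 B p| <= p ^ m)%N.
Proof.
move=> pr ha [f [finj _ fD]].
have f0 : forall i, f 0 i = 0.
  by move=> i; apply: (addrI (f 0 i)); rewrite -fD !addr0.
have fMn : forall x n i, f (x *+ n) i = f x i *+ n.
  move=> x n i; elim: n => [|n IH]; first by rewrite !mulr0n f0.
  by rewrite !mulrS fD IH.
have fp : forall x i, x *+ p = 0 -> f x i *+ p = 0 by move=> x i hx; rewrite -fMn hx f0.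
have [q def_p] : exists q, p = q.+1 by exists p.-1; rewrite prednK // prime_gt0.
pose g (x : B) : {ffun 'I_m -> 'I_q.+1} :=
  [ffun i => inord (val (f x i) %/ p ^ (alpha i).-1)].
apply: (@leq_trans #|[set: {ffun 'I_m -> 'I_q.+1}]|).
  rewrite -(@card_in_imset _ _ g (Om1 B p)) ?subset_leq_card ?subsetT //.
  move=> x y; rewrite /Om1 !inE => /eqP hx /eqP hy hg.
  apply: finj; apply: functional_extensionality_dep => i.
  have := congr1 (fun h : {ffun 'I_m -> 'I_q.+1} => nat_of_ord (h i)) hg; rewrite /g !ffunE /=.
  have [dx ltx] := Zp_dig pr (ha i) (fp x i hx).
  have [dy lty] := Zp_dig pr (ha i) (fp y i hy).
  rewrite !inordK -?def_p // => hq.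
  by apply: val_inj; rewrite /= -(divnK dx) -(divnK dy) hq.
by rewrite cardsT card_ffun card_ord def_p card_ord.
Qed.

Lemma Zn_char n (z : 'Z_n) : (1 < n)%N -> z *+ n = 0.
Proof. by move=> n1; rewrite -mulr_natr pchar_Zp // mulr0. Qed.

Lemma card_ppow (B : finZmodType) p m (alpha : 'I_m -> nat) : prime p ->
  (forall i, 1 <= alpha i)%N -> add_iso_prod_cyclic B p alpha -> exists s, #|B| = (p ^ s)%N.
Proof.
move=> pr ha [f [finj _ fD]].
have f0 : forall i, f 0 i = 0.
  by move=> i; apply: (addrI (f 0 i)); rewrite -fD !addr0.
have fMn : forall x n i, f (x *+ n) i = f x i *+ n.
  move=> x n i; elim: n => [|n IH]; first by rewrite !mulr0n f0.
  by rewrite !mulrS fD IH.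
pose K := (\sum_(i < m) alpha i)%N.
have hK : forall x : B, x *+ (p ^ K) = 0.
  move=> x; apply: finj; apply: functional_extensionality_dep => i.
  rewrite f0 fMn.
  have hi : (alpha i <= K)%N by rewrite /K (bigD1 i) //= leq_addr.
  rewrite -(subnK hi) expnD mulrnA Zn_char ?mul0rn //.
  by rewrite -(expn0 p) ltn_exp2l ?prime_gt1.
have : p.-nat #|B|.
  apply/pnatP; first by apply/card_gt0P; exists 0.
  move=> q prq qB.
  have qB' : (q %| #|[set: B]|)%N by rewrite cardsT.
  have [x _ ox] := Cauchy (G := [set: B]%G) prq qB'.
  have : (#[x]%g %| p ^ K)%N by rewrite order_dvdn; apply/eqP; exact: hK.
  rewrite ox Euclid_dvdX // => /andP[qp _].
  by rewrite inE /= -(dvdn_prime2 prq pr).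
by case/p_natP => s hs; exists s.
Qed.

Section MulGroup.
Variables (B : finZmodType) (mul : B -> B -> B) (one : B) (inv : B -> B).
Hypothesis HB : is_left_brace mul one inv.

Lemma mul_inj b : injective (mul b).
Proof.
case: HB => hA h1 hV _ x y hxy.
have := congr1 (mul (inv b)) hxy; rewrite !hA (proj1 (hV b)).
by rewrite !(proj1 (h1 _)).
Qed.

Definition sig_ (b : B) : {perm B} := perm (@mul_inj b).

Lemma bpow_card a : bpow mul one a #|B| = one.
Proof.
case: HB => hA h1 hV _.
pose G := [set sig_ b | b : B].
have gG : group_set G.
  apply/group_setP; split.
    apply/imsetP; exists one => //; apply/permP => x.
    by rewrite perm1 permE (proj1 (h1 x)).
  move=> _ _ /imsetP[b _ ->] /imsetP[c _ ->]; apply/imsetP; exists (mul c b) => //.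
  by apply/permP => x; rewrite permM !permE hA.
have inj : injective sig_.
  move=> b c h; have := congr1 (fun s : {perm B} => s one) h.
  by rewrite !permE !(proj2 (h1 _)).
have cG : #|Group gG| = #|B| by rewrite /= card_imset.
have aG : sig_ a \in Group gG by rewrite /= imset_f.
have := order_dvdG aG; rewrite cG order_dvdn => /eqP h.
have := congr1 (fun s : {perm B} => s one) h; rewrite permX perm1 => hs.
rewrite -[RHS]hs /bpow; elim: #|B| => [|n IH] //=.
by rewrite IH permE.
Qed.

End MulGroup.

Unset Implicit Arguments.

Theorem mainTheorem6 (p m : nat) (B : finZmodType)
    (mul : B -> B -> B) (one : B) (inv : B -> B) (alpha : 'I_m -> nat) :
  prime p -> (0 < m)%N -> (m + 2 <= p)%N ->
  is_left_brace mul one inv ->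
  (forall i : 'I_m, (1 <= alpha i)%N) ->
  (forall i j : 'I_m, (i <= j)%N -> (alpha i <= alpha j)%N) ->
  @add_iso_prod_cyclic B p m alpha ->
  forall (i : nat) (a : B), (1 <= i)%N ->
    a \in Omega p i.+1 -> a \notin Omega p i ->
    bpow mul one a p \in Omega p i /\ bpow mul one a p \notin Omega p i.-1.
Proof.
move=> pr m0 mp2 HB ha hmono hiso i a i1 ha1 ha0.
have [s hs] := card_ppow pr ha hiso.
pose L := blam mul a.
have LD : additf L := blamD HB a.
pose E := fun y => L y - y.
have ED : additf E := adf_sub LD.
have hL : forall x, iter (p ^ s) L x = x.
  by move=> x; rewrite /L (iter_blam HB) -hs (bpow_card HB) (blam1 HB).
have hN : forall x, x *+ p = 0 -> iter (p ^ s) E x = 0.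
  by move=> x hx; rewrite (pow_iter s pr LD hx) hL subrr.
have hc := card_Om1 pr ha hiso.
have Hnil : forall x, x *+ p = 0 -> iter m E x = 0.
  move=> x hx; have : x \in Sk p E m by rewrite (Sk_m pr ED hN hc) /Om1 inE hx.
  by rewrite inE => /andP[_ /eqP].
have Hk : forall x k, x *+ p = 0 -> (m <= k)%N -> iter k E x = 0.
  by move=> x k hx mk; rewrite -(subnK mk) iterD Hnil // (adf0 (adf_iter _ ED)).
have hsum : bpow mul one a p = \sum_(j < p) iter j E a *+ 'C(p, j.+1).
  by rewrite (bpow_sum HB) geom_iter.
rewrite /Omega !inE in ha1 ha0 *.
split.
  rewrite hsum -sumrMnl big1 // => j _.
  rewrite -mulrnA mulnC mulrnA -(adfMn (adf_iter j ED)).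
  have hb : (a *+ p ^ i) *+ p = 0 by rewrite -mulrnA -expnSr (eqP ha1).
  case: (ltnP j.+1 p) => hj.
    apply: (mulrn_dvd_0 (p := p)); first exact: adf_p0 (adf_iter j ED) hb.
    by apply: prime_dvd_bin.
  have jm : (m <= j)%N by have := ltn_ord j; lia.
  by rewrite Hk ?mul0rn.
case: i i1 ha1 ha0 => // i' _ ha1 ha0 /=.
pose c := a *+ p ^ i'.
pose e := c *+ p.
have he : e = a *+ p ^ i'.+1 by rewrite /e /c -mulrnA -expnSr.
have hep : e *+ p = 0 by rewrite he -mulrnA -expnSr (eqP ha1).
have ex : exists r, iter r E e == 0 by exists m; rewrite Hk.
case: (ex_minnP ex) => r hr hmin.
case: r hr hmin => [|r'] hr hmin; first by rewrite /= he (negbTE ha0) in hr.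
apply/negP => /eqP H0.
have := congr1 (iter r' E) H0; rewrite (adf0 (adf_iter r' ED)).
rewrite hsum -sumrMnl (adf_sum _ (adf_iter r' ED)).
have [p' def_p] : exists p', p = p'.+1 by exists p.-1; rewrite prednK // prime_gt0.
have T0 : iter r' E (iter 0 E a *+ 'C(p, 1) *+ p ^ i') = iter r' E e.
  by rewrite /= bin1 /e /c mulrnAC.
have Tj : forall j, (0 < j < p)%N -> iter r' E (iter j E a *+ 'C(p, j.+1) *+ p ^ i') = 0.
  move=> j /andP[j0 jp].
  rewrite mulrnAC -(adfMn (adf_iter j ED)) -/c (adfMn (adf_iter r' ED)) -iterD.
  have hj : (r' + j = j.-1 + r'.+1)%N by lia.
  have y0 : iter (r' + j) E c *+ p = 0.
    by rewrite -(adfMn (adf_iter _ ED)) -/e hj iterD (eqP hr) (adf0 (adf_iter _ ED)).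
  case: (ltnP j.+1 p) => hjp.
    by apply: (mulrn_dvd_0 y0); apply: prime_dvd_bin => //; rewrite hjp.
  rewrite hj iterD Hk ?mul0rn //; last by lia.
  by rewrite -(adfMn (adf_iter _ ED)) -/e (eqP hr).
subst p; rewrite big_ord_recl T0 big1 ?addr0.
  by move=> h; have := hmin r'; rewrite h eqxx ltnn => /(_ isT).
move=> j _; apply: (Tj (bump 0 j)).
by rewrite /bump /= add1n ltnS ltn_ord.
Qed.
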